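(* Let $\mathbb T$ be a finitary monad corresponding to an algebraic theory over a signature $\Sigma$, and let $B$ be a $\mathbb T$-algebra finitely generated by a finite set $B_0$. For every reactive expression $e\in\mathrm{Exp}_\Sigma(B_0)$ there exist a $\mathbb T$-automaton $m$ (with output algebra $B$ and finite state set $X$) and a state $x\in X$ with $\llbracket e\rrbracket=\llbracket x\rrbracket_m$; conversely, for every such $\mathbb T$-automaton $m$ and every state $x\in X$ there is a reactive expression $e\in\mathrm{Exp}_\Sigma(B_0)$ with $\llbracket e\rrbracket=\llbracket x\rrbracket_m$.
   Context: Fix a finite set of actions $A=\{a_1,\dots,a_n\}$; $LX=B\times X^A$; $L$-coalgebras $(X,o,\partial_a)$ with $\partial_\epsilon(x)=x$, $\partial_{aw}(x)=\partial_w(\partial_a(x))$; $B^{A^*}$ is the final $L$-coalgebra ($o(\sigma)=\sigma(\epsilon)$, $\partial_a\sigma=\lambda w.\sigma(aw)$) and $\llbracket-\rrbracket$ denotes the unique coalgebra morphism into it. $TX$ is the set of $\Sigma$-terms over $X$ modulo the theory; ''finitely generated by $B_0$'' means there is a surjective $\mathbb T$-algebra morphism $TB_0\to B$. A $\mathbb T$-automaton consists of a finite set $X$, the algebra $a^m:TB\to B$, and maps $o^m:X\to B$, $t^m:A\times X\to TX$; its trace semantics is $\llbracket x\rrbracket_m=\llbracket\eta_X(x)\rrbracket_{TX}$, where $TX$ carries the $L$-coalgebra structure $m^\sharp:TX\to B\times(TX)^A$, the unique $\mathbb T$-algebra morphism (for the componentwise algebra structure built from $a^m$ and the free structure on $TX$)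 with $m^\sharp(\eta_X(x))=(o^m(x),\lambda a.\,t^m(a,x))$. Reactive expressions are the closed terms $\delta$ of the grammar $\delta::=x\mid\gamma\mid f(\delta,\dots,\delta)$ ($f\in\Sigma$), $\gamma::=\mu x.\,(a_1.\delta\pitchfork\cdots\pitchfork a_n.\delta\pitchfork\beta)$, $\beta::=b\mid f(\beta,\dots,\beta)$ ($b\in B_0$); their set $\mathrm{Exp}_\Sigma(B_0)$ is an $L$-coalgebra via $o(f(e_1,\dots,e_k))=f^B(o(e_1),\dots,o(e_k))$, $\partial_a(f(e_1,\dots,e_k))=f(\partial_a e_1,\dots,\partial_a e_k)$, $o(\mu x.(a_1.e_1\pitchfork\cdots\pitchfork a_n.e_n\pitchfork\beta))=$ the value of $\beta$ in $B$, $\partial_{a_i}(\mu x.(a_1.e_1\pitchfork\cdots\pitchfork a_n.e_n\pitchfork\beta))=e_i[\mu x.(a_1.e_1\pitchfork\cdots\pitchfork a_n.e_n\pitchfork\beta)/x]$, and $\llbracket e\rrbracket$ is the trace semantics of $e$ in this coalgebra. *)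

(* Defs.v *)
From mathcomp Require Import all_boot.
Set Implicit Arguments. Unset Strict Implicit. Unset Printing Implicit Defensive.

Inductive term (Op : Type) (ar : Op -> nat) (X : Type) : Type :=
| Var (x : X)
| App (f : Op) (args : 'I_(ar f) -> term ar X).
Arguments Var {Op ar X} x.
Arguments App {Op ar X} f args.

Fixpoint eval (Op : Type) (ar : Op -> nat) (B : Type)
    (interp : forall f : Op, ('I_(ar f) -> B) -> B) (X : Type) (v : X -> B)
    (t : term ar X) : B :=
  match t with
  | Var x => v x
  | App f args => interp f (fun i => eval interp v (args i))
  end.

(* Substitution (Kleisli extension of the term monad). *)
Fixpoint bind (Op : Type) (ar : Op -> nat) (X Y : Type)
    (t : term ar X) (s : X -> term ar Y) : term ar Y :=
  match t with
  | Var x => s x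
  | App f args => App f (fun i => bind (args i) s)
  end.

(* (B, interp) is a model (T-algebra) of the equational theory E, where E is
   a set of equations between terms in variables nat. *)
Definition is_model (Op : Type) (ar : Op -> nat)
    (E : term ar nat -> term ar nat -> Prop) (B : Type)
    (interp : forall f : Op, ('I_(ar f) -> B) -> B) : Prop :=
  forall l r, E l r -> forall v : nat -> B, eval interp v l = eval interp v r.

(* B is finitely generated by B0 via gen : B0 -> B: the induced T-algebra
   morphism TB0 -> B (t |-> eval gen t) is surjective. *)
Definition generated_by (Op : Type) (ar : Op -> nat) (B : Type)
    (interp : forall f : Op, ('I_(ar f) -> B) -> B) (B0 : Type) (gen : B0 -> B)
    : Prop :=
  forall b : B, exists t : term ar B0, eval interp gen t = b.

(* A T-automaton with finite state set X, output algebra B, output map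
   om : X -> B and transitions tm : A -> X -> TX (terms taken as
   representatives of their classes in TX).  Trace semantics of t in TX
   for the L-coalgebra m# : TX -> B x (TX)^A:
     o(t) = eval of t in B under om;  d_a(t) = t[tm a / vars]. *)
Fixpoint trace_term (Op : Type) (ar : Op -> nat) (B : Type)
    (interp : forall f : Op, ('I_(ar f) -> B) -> B) (A X : Type)
    (om : X -> B) (tm : A -> X -> term ar X) (t : term ar X) (w : seq A) : B :=
  match w with
  | [::] => eval interp om t
  | a :: w' => trace_term interp om tm (bind t (tm a)) w'
  end.

(* [[x]]_m := [[eta_X x]]_{TX} *)
Definition trace_state (Op : Type) (ar : Op -> nat) (B : Type)
    (interp : forall f : Op, ('I_(ar f) -> B) -> B) (A X : Type)
    (om : X -> B) (tm : A -> X -> term ar X) (x : X) : seq A -> B :=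
  trace_term interp om tm (Var x).

(* Raw syntax of the grammar
     delta ::= x | gamma | f(delta,...,delta)
     gamma ::= mu x.(a1.delta ⋔ ... ⋔ an.delta ⋔ beta)
     beta  ::= b | f(beta,...,beta)     (b in B0)
   with variables named by nat; the n branches a_i.delta are given as a
   function A -> rexp, and beta is a Sigma-term over B0. *)
Inductive rexp (Op : Type) (ar : Op -> nat) (A B0 : Type) : Type :=
| RVar (x : nat)
| RMu (x : nat) (d : A -> rexp ar A B0) (beta : term ar B0)
| RApp (f : Op) (args : 'I_(ar f) -> rexp ar A B0).
Arguments RVar {Op ar A B0} x.
Arguments RMu {Op ar A B0} x d beta.
Arguments RApp {Op ar A B0} f args.

Fixpoint occurs_free (Op : Type) (ar : Op -> nat) (A : finType) (B0 : Type)
    (y : nat) (e : rexp ar A B0) : bool :=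
  match e with
  | RVar z => z == y
  | RMu z d _ => (z != y) && [exists a, occurs_free y (d a)]
  | RApp f args => [exists i, occurs_free y (args i)]
  end.

(* Exp_Sigma(B0) = closed expressions. *)
Definition rclosed (Op : Type) (ar : Op -> nat) (A : finType) (B0 : Type)
    (e : rexp ar A B0) : Prop := forall y : nat, ~~ occurs_free y e.

(* Substitution e[g/x] (only used with g closed, so no capture). *)
Fixpoint rsubst (Op : Type) (ar : Op -> nat) (A B0 : Type)
    (x : nat) (g : rexp ar A B0) (e : rexp ar A B0) : rexp ar A B0 :=
  match e with
  | RVar y => if y == x then g else RVar y
  | RMu y d beta =>
      if y == x then RMu y d beta else RMu y (fun a => rsubst x g (d a)) beta
  | RApp f args => RApp f (fun i => rsubst x g (args i))
  end.

Fixpoint rderiv (Op : Type) (ar : Op -> nat) (A B0 : Type)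
    (a : A) (e : rexp ar A B0) : rexp ar A B0 :=
  match e with
  | RVar y => RVar y
  | RMu x d beta => rsubst x (RMu x d beta) (d a)
  | RApp f args => RApp f (fun i => rderiv a (args i))
  end.

Fixpoint rderivs (Op : Type) (ar : Op -> nat) (A B0 : Type)
    (w : seq A) (e : rexp ar A B0) : rexp ar A B0 :=
  match w with
  | [::] => e
  | a :: w' => rderivs w' (rderiv a e)
  end.

(* Output o, given as a relation (its graph); it is total and functional on
   closed expressions:
     o(f(e1..ek)) = f^B(o e1, ..., o ek),  o(mu x.(... ⋔ beta)) = [[beta]]_B. *)
Inductive rout (Op : Type) (ar : Op -> nat) (A B0 B : Type)
    (interp : forall f : Op, ('I_(ar f) -> B) -> B) (gen : B0 -> B)
    : rexp ar A B0 -> B -> Prop :=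
| rout_mu x d beta : rout interp gen (RMu x d beta) (eval interp gen beta)
| rout_app f args (bs : 'I_(ar f) -> B) :
    (forall i, rout interp gen (args i) (bs i)) ->
    rout interp gen (RApp f args) (interp f bs).

Definition rsem_is (Op : Type) (ar : Op -> nat) (A B0 B : Type)
    (interp : forall f : Op, ('I_(ar f) -> B) -> B) (gen : B0 -> B)
    (e : rexp ar A B0) (sigma : seq A -> B) : Prop :=
  forall w : seq A, rout interp gen (rderivs w e) (sigma w).

(* Main.v *)
Require Import Defs.
From mathcomp Require Import all_boot.
From Stdlib Require Import FunctionalExtensionality.
Set Implicit Arguments. Unset Strict Implicit. Unset Printing Implicit Defensive.

Fixpoint ssub {Op : Type} {ar : Op -> nat} {A B0 : Type}
   (rho : nat -> option (rexp ar A B0)) (e : rexp ar A B0) : rexp ar A B0 :=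
  match e with
  | RVar n => match rho n with Some g => g | None => RVar n end
  | RMu n d beta => RMu n (fun a => ssub (fun k => if k == n then None else rho k) (d a)) beta
  | RApp f args => RApp f (fun i => ssub rho (args i))
  end.

Definition remv {T : Type} (rho : nat -> option T) n :=
  fun k => if k == n then None else rho k.
Definition updv {T : Type} (rho : nat -> option T) n (g : T) :=
  fun k => if k == n then Some g else rho k.

Definition cvals {Op : Type} {ar : Op -> nat} {A : finType} {B0 : Type}
   (rho : nat -> option (rexp ar A B0)) := forall k h, rho k = Some h -> rclosed h.

Lemma rsubst_nf {Op : Type} {ar : Op -> nat} {A : finType} {B0 : Type}
  (n : nat) (g e : rexp ar A B0) : ~~ occurs_free n e -> rsubst n g e = e.
Proof.
elim: e => [y|y d IH beta|f args IH] /=.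
- by move=> H; rewrite (negbTE H).
- case: eqP => [//|Hy] H.
  have : ~~ [exists a, occurs_free n (d a)].
    by move: H; apply: contra => ->; rewrite andbT; apply/eqP.
  move/existsPn => Hd; congr RMu; apply: functional_extensionality => a.
  exact: IH.
- move/existsPn => Hd; congr RApp; apply: functional_extensionality => i.
  exact: IH.
Qed.

Lemma cvals_rem {Op : Type} {ar : Op -> nat} {A : finType} {B0 : Type}
   (rho : nat -> option (rexp ar A B0)) n : cvals rho -> cvals (remv rho n).
Proof. by move=> H k h; rewrite /remv; case: (k == n) => //; apply: H. Qed.

Lemma free_ssub {Op : Type} {ar : Op -> nat} {A : finType} {B0 : Type}
  (rho : nat -> option (rexp ar A B0)) e n : cvals rho ->
  occurs_free n (ssub rho e) -> occurs_free n e /\ rho n = None.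
Proof.
elim: e rho => [y|y d IH beta|f args IH] rho Hc /=.
- case E: (rho y) => [h|].
    by move: (Hc _ _ E n); move=> /negP.
  by move=> /= /eqP <-.
- case/andP=> Hy /existsP [a Ha].
  have [H1 H2] := IH a _ (cvals_rem (n:=y) Hc) Ha.
  split; first by rewrite Hy /=; apply/existsP; exists a.
  by move: H2; rewrite /remv eq_sym (negbTE Hy).
- case/existsP=> i Hi.
  have [H1 H2] := IH i _ Hc Hi.
  by split => //; apply/existsP; exists i.
Qed.

Lemma rsubst_ssub {Op : Type} {ar : Op -> nat} {A : finType} {B0 : Type}
  (rho : nat -> option (rexp ar A B0)) n g e : cvals rho -> rho n = None ->
  rsubst n g (ssub rho e) = ssub (updv rho n g) e.
Proof.
elim: e rho => [y|y d IH beta|f args IH] rho Hc Hn /=.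
- rewrite /updv; case: (eqVneq y n) => [->|Hy]; first by rewrite Hn /= eqxx.
  case E: (rho y) => [h|] /=; last by rewrite (negbTE Hy).
  by apply: rsubst_nf; exact: (Hc _ _ E n).
- case: (eqVneq y n) => [->|Hy].
    congr RMu; apply: functional_extensionality => a; congr ssub.
    apply: functional_extensionality => k; rewrite /updv.
    by case: (eqVneq k n).
  congr RMu; apply: functional_extensionality => a.
  rewrite IH; [|exact: cvals_rem|by rewrite /= eq_sym (negbTE Hy)].
  congr ssub; apply: functional_extensionality => k; rewrite /updv /remv.
  case: (eqVneq k n) => [->|//]; by rewrite eq_sym (negbTE Hy).
- congr RApp; apply: functional_extensionality => i; exact: IH.
Qed.

Lemma trace_term_cons {Op : Type} {ar : Op -> nat} {B : Type}
    (interp : forall f : Op, ('I_(ar f) -> B) -> B) (A X : Type)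
    (om : X -> B) (tm : A -> X -> term ar X) t a w :
  trace_term interp om tm t (a :: w) = trace_term interp om tm (bind t (tm a)) w.
Proof. by []. Qed.

Lemma sim_lemma {Op : Type} {ar : Op -> nat} {A B0 B : Type}
    (interp : forall f : Op, ('I_(ar f) -> B) -> B) (gen : B0 -> B) (X : Type)
    (om : X -> B) (tm : A -> X -> term ar X)
    (R : rexp ar A B0 -> term ar X -> Prop) :
  (forall e t, R e t -> rout interp gen e (eval interp om t) /\
      forall a, R (rderiv a e) (bind t (tm a))) ->
  forall e t, R e t -> rsem_is interp gen e (trace_term interp om tm t).
Proof.
move=> HR e t Ret w; elim: w e t Ret => [|a w IH] e t Ret /=.
  by case: (HR _ _ Ret).
by apply: IH; case: (HR _ _ Ret).
Qed.

Fixpoint tr {Op : Type} {ar : Op -> nat} {A B0 X : Type}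
  (t : term ar X) (k : X -> rexp ar A B0) : rexp ar A B0 :=
  match t with
  | Var y => k y
  | App f args => RApp f (fun i => tr (args i) k)
  end.

Lemma ssub_tr {Op : Type} {ar : Op -> nat} {A B0 X : Type}
  (rho : nat -> option (rexp ar A B0)) (t : term ar X) k :
  ssub rho (tr t k) = tr t (fun z => ssub rho (k z)).
Proof.
elim: t => [y|f args IH] //=; congr RApp; apply: functional_extensionality => i.
exact: IH.
Qed.

Lemma free_tr {Op : Type} {ar : Op -> nat} {A : finType} {B0 X : Type}
  (t : term ar X) (k : X -> rexp ar A B0) n :
  occurs_free n (tr t k) -> exists z, occurs_free n (k z).
Proof.
elim: t => [y|f args IH] /=; first by move=> H; exists y.
by case/existsP => i /IH.
Qed.

Definition nm {X : finType} (x : X) : nat := nat_of_ord (enum_rank x).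

Lemma nm_inj {X : finType} : injective (@nm X).
Proof. by move=> x y /ord_inj /enum_rank_inj. Qed.

Fixpoint Fn {Op : Type} {ar : Op -> nat} {A : finType} {B0 : Type} {X : finType}
  (tm : A -> X -> term ar X) (beta : X -> term ar B0)
  (k : nat) (y : X) (V : seq X) : rexp ar A B0 :=
  match k with
  | 0 => RVar (nm y)
  | k'.+1 => if y \in V then RVar (nm y)
             else RMu (nm y) (fun a => tr (tm a y) (fun z => Fn tm beta k' z (y :: V))) (beta y)
  end.

Lemma Fn_in {Op : Type} {ar : Op -> nat} {A : finType} {B0 : Type} {X : finType}
  (tm : A -> X -> term ar X) (beta : X -> term ar B0) k y V :
  y \in V -> Fn tm beta k y V = RVar (nm y).
Proof. by case: k => //= k ->. Qed.

Lemma size_notin {X : finType} (y : X) (V : seq X) :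
  y \notin V -> uniq V -> (size V < #|X|)%N.
Proof.
move=> Hy HV; have HU : uniq (y :: V) by rewrite /= Hy.
by have := card_uniqP HU; move=> Hs; rewrite -ltnS -[(size V).+1]/(size (y :: V)) -Hs ltnS max_card.
Qed.

Lemma free_Fn {Op : Type} {ar : Op -> nat} {A : finType} {B0 : Type} {X : finType}
  (tm : A -> X -> term ar X) (beta : X -> term ar B0) k y V n :
  uniq V -> (#|X| <= k + size V)%N -> occurs_free n (Fn tm beta k y V) ->
  exists2 v, v \in V & n = nm v.
Proof.
elim: k y V => [|k IH] y V HV Hk /=.
  case: (boolP (y \in V)) => Hy; first by move/eqP=> <-; exists y.
  by have := size_notin Hy HV; rewrite ltnNge Hk.
case: (boolP (y \in V)) => Hy; first by move/eqP=> <-; exists y.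
case/andP=> Hn /existsP [a /free_tr [z Hz]].
have HU : uniq (y :: V) by rewrite /= Hy.
have Hk' : (#|X| <= k + size (y :: V))%N by rewrite /= addnS.
have [v] := IH z _ HU Hk' Hz; rewrite inE => /orP [/eqP ->|Hv] Hnv.
  by move: Hn; rewrite Hnv eqxx.
by exists v.
Qed.

Inductive Sx {Op : Type} {ar : Op -> nat} {A : finType} {B0 : Type} {X : finType}
  (tm : A -> X -> term ar X) (beta : X -> term ar B0) : X -> rexp ar A B0 -> Prop :=
| mkS y V k (rho : nat -> option (rexp ar A B0)) :
    y \notin V -> uniq V -> (#|X| <= k + size V)%N -> cvals rho ->
    (forall v, v \in V -> exists h, rho (nm v) = Some h /\ Sx tm beta v h) ->
    Sx tm beta y (ssub rho (Fn tm beta k y V)).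

Inductive Rc {Op : Type} {ar : Op -> nat} {A : finType} {B0 : Type} {X : finType}
  (tm : A -> X -> term ar X) (beta : X -> term ar B0) : rexp ar A B0 -> term ar X -> Prop :=
| rc_base x h : Sx tm beta x h -> Rc tm beta h (Var x)
| rc_app f args ts : (forall i, Rc tm beta (args i) (ts i)) -> Rc tm beta (RApp f args) (App f ts).

Lemma Rc_tr {Op : Type} {ar : Op -> nat} {A : finType} {B0 : Type} {X : finType}
  (tm : A -> X -> term ar X) (beta : X -> term ar B0) (t : term ar X) k :
  (forall z, Rc tm beta (k z) (Var z)) -> Rc tm beta (tr t k) t.
Proof.
move=> Hk; elim: t => [y|f args IH] /=; first exact: Hk.
by constructor.
Qed.

Lemma Sx_closed {Op : Type} {ar : Op -> nat} {A : finType} {B0 : Type} {X : finType}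
  (tm : A -> X -> term ar X) (beta : X -> term ar B0) y h :
  Sx tm beta y h -> rclosed h.
Proof.
case=> {y h} y V k rho Hy HV Hk Hc HS n; apply/negP => Hf.
have [Hf1 Hn] := free_ssub Hc Hf.
have [v Hv Hnv] := free_Fn HV Hk Hf1.
have [h [Hh _]] := HS v Hv.
by move: Hn; rewrite Hnv Hh.
Qed.

Lemma Sx_step {Op : Type} {ar : Op -> nat} {A : finType} {B0 B : Type} {X : finType}
  (interp : forall f : Op, ('I_(ar f) -> B) -> B) (gen : B0 -> B) (om : X -> B)
  (tm : A -> X -> term ar X) (beta : X -> term ar B0)
  (Hbeta : forall x, eval interp gen (beta x) = om x) y h :
  Sx tm beta y h -> rout interp gen h (om y) /\
     forall a, Rc tm beta (rderiv a h) (tm a y).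
Proof.
move=> HSy; have Hcl := Sx_closed HSy.
case: HSy Hcl => {y h} y V k rho Hy HV Hk Hc HS Hcl.
have [k' Ek] : exists k', k = k'.+1.
  case: k Hk {Hcl} => [|k'] Hk; last by exists k'.
  by have := size_notin Hy HV; rewrite ltnNge Hk.
subst k.
set C := ssub rho (Fn tm beta k'.+1 y V).
have HSC : Sx tm beta y C by apply: mkS.
have HclC : rclosed C := Sx_closed HSC.
have EC : C = RMu (nm y) (fun a => ssub (remv rho (nm y))
    (tr (tm a y) (fun z => Fn tm beta k' z (y :: V)))) (beta y).
  by rewrite /C /= (negbTE Hy).
clearbody C; split.
  by rewrite EC -Hbeta; constructor.
move=> a; rewrite {1}EC /= -EC.
rewrite rsubst_ssub; last 2 first.
- exact: cvals_rem.
- by rewrite /remv eqxx.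
rewrite ssub_tr; apply: Rc_tr => z.
set rho' := updv _ _ _.
have Hc' : cvals rho'.
  move=> n g; rewrite /rho' /updv; case: (n == nm y); first by case=> <-.
  exact: cvals_rem.
have HS' : forall v, v \in y :: V -> exists h, rho' (nm v) = Some h /\ Sx tm beta v h.
  move=> v; rewrite inE; case: (eqVneq v y) => [->|Hvy] /= Hv.
    exists C; split; first by rewrite /rho' /updv eqxx.
    exact: HSC.
  have [h [Hh HSh]] := HS v Hv; exists h; split => //.
  rewrite /rho' /updv /remv.
  have -> : (nm v == nm y) = false by apply/negbTE; apply: contra Hvy => /eqP/nm_inj ->.
  exact: Hh.
case: (boolP (z \in y :: V)) => Hz.
  rewrite Fn_in //=; have [h [-> HSh]] := HS' z Hz; exact: rc_base.
apply: rc_base; apply: mkS => //.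
- by rewrite /= Hy.
- by rewrite /= addnS.
Qed.

Lemma Rc_sim {Op : Type} {ar : Op -> nat} {A : finType} {B0 B : Type} {X : finType}
  (interp : forall f : Op, ('I_(ar f) -> B) -> B) (gen : B0 -> B) (om : X -> B)
  (tm : A -> X -> term ar X) (beta : X -> term ar B0)
  (Hbeta : forall x, eval interp gen (beta x) = om x) e t :
  Rc tm beta e t -> rout interp gen e (eval interp om t) /\
      forall a, Rc tm beta (rderiv a e) (bind t (tm a)).
Proof.
elim=> [x h HS|f args ts _ IH].
  exact: (Sx_step Hbeta HS).
split; first by constructor => i; case: (IH i).
by move=> a /=; constructor => i; case: (IH i) => _; apply.
Qed.

From Stdlib Require Import ClassicalEpsilon.

Lemma dir2 {Op : Type} {ar : Op -> nat} {A : finType} {B0 B : Type}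
  (interp : forall f : Op, ('I_(ar f) -> B) -> B) (gen : B0 -> B)
  (Hgen : generated_by interp gen)
  (X : finType) (om : X -> B) (tm : A -> X -> term ar X) (x : X) :
  exists e : rexp ar A B0,
    rclosed e /\ rsem_is interp gen e (trace_state interp om tm x).
Proof.
pose beta := fun y => proj1_sig (constructive_indefinite_description _ (Hgen (om y))).
have Hbeta : forall y, eval interp gen (beta y) = om y.
  by move=> y; rewrite /beta; case: constructive_indefinite_description.
have HS : Sx tm beta x (ssub (fun _ => None) (Fn tm beta #|X| x [::])).
  by apply: mkS => //; rewrite addn0.
exists (ssub (fun _ => None) (Fn tm beta #|X| x [::])); split.
  exact: Sx_closed HS.
apply: (sim_lemma (R := Rc tm beta)); last exact: rc_base HS.
by move=> e t; apply: Rc_sim.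
Qed.

Unset Implicit Arguments.
Fixpoint St {Op : Type} {ar : Op -> nat} {A : finType} {B0 : Type} (e : rexp ar A B0) : finType :=
  match e with
  | RVar _ => void
  | RMu _ d _ => option {a : A & St (d a)}
  | RApp f args => {i : 'I_(ar f) & St (args i)}
  end.

Fixpoint out {Op : Type} {ar : Op -> nat} {A : finType} {B0 B : Type}
   (interp : forall f : Op, ('I_(ar f) -> B) -> B) (gen : B0 -> B)
   (e : rexp ar A B0) : St e -> B :=
  match e as e0 return St e0 -> B with
  | RVar _ => fun s => match s with end
  | RMu _ d beta => fun s => match s with
                   | None => eval interp gen beta
                   | Some (existT a s') => out interp gen (d a) s'
                   end
  | RApp f args => fun s => match s with existT i s' => out interp gen (args i) s' end
  end.

Fixpoint cl {Op : Type} {ar : Op -> nat} {A : finType} {B0 : Type}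
   (e : rexp ar A B0) (rho : nat -> option (rexp ar A B0)) : St e -> rexp ar A B0 :=
  match e as e0 return St e0 -> rexp ar A B0 with
  | RVar _ => fun s => match s with end
  | RMu n d beta => fun s => match s with
                   | None => ssub rho (RMu n d beta)
                   | Some (existT a s') =>
                       cl (d a) (updv (remv rho n) n (ssub rho (RMu n d beta))) s'
                   end
  | RApp f args => fun s => match s with existT i s' => cl (args i) rho s' end
  end.

Definition updT {T : Type} (env : nat -> T) n (t : T) :=
  fun k => if k == n then t else env k.

Fixpoint init {Op : Type} {ar : Op -> nat} {A : finType} {B0 : Type} {Z : Type}
   (e : rexp ar A B0) (iota : St e -> Z) (env : nat -> term ar Z) : term ar Z :=
  match e as e0 return (St e0 -> Z) -> term ar Z with
  | RVar n => fun _ => env n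
  | RMu _ _ _ => fun iota => Var (iota None)
  | RApp f args => fun iota => App f (fun i => init (args i) (fun s => iota (existT _ i s)) env)
  end iota.

Fixpoint trans {Op : Type} {ar : Op -> nat} {A : finType} {B0 : Type} {Z : Type}
   (e : rexp ar A B0) (iota : St e -> Z) (env : nat -> term ar Z) (a : A) : St e -> term ar Z :=
  match e as e0 return (St e0 -> Z) -> St e0 -> term ar Z with
  | RVar n => fun _ s => match s with end
  | RMu n d _ => fun iota s => match s with
       | None => init (d a) (fun s' => iota (Some (existT _ a s'))) (updT env n (Var (iota None)))
       | Some (existT b s') => trans (d b) (fun s'' => iota (Some (existT _ b s'')))
                                  (updT env n (Var (iota None))) a s'
       end
  | RApp f args => fun iota s => match s with existT i s' =>
       trans (args i) (fun s'' => iota (existT _ i s'')) env a s' end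
  end iota.


Inductive Rc1 {Op : Type} {ar : Op -> nat} {A : finType} {B0 : Type} (e0 : rexp ar A B0)
  : rexp ar A B0 -> term ar (option (St e0)) -> Prop :=
| r1_base s : Rc1 e0 (cl e0 (fun _ => None) s) (Var (Some s))
| r1_app f args ts : (forall i, Rc1 e0 (args i) (ts i)) -> Rc1 e0 (RApp f args) (App f ts).

Lemma out_cl {Op : Type} {ar : Op -> nat} {A : finType} {B0 B : Type}
   (interp : forall f : Op, ('I_(ar f) -> B) -> B) (gen : B0 -> B)
   (e : rexp ar A B0) rho s : rout interp gen (cl e rho s) (out interp gen e s).
Proof.
elim: e rho s => [n|n d IH beta|f args IH] rho s /=.
- by case: s.
- case: s => [[a s']|] /=; first exact: IH.
  exact: rout_mu.
- case: s => i s' /=; exact: IH.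
Qed.

Lemma L1 {Op : Type} {ar : Op -> nat} {A : finType} {B0 : Type} (e0 : rexp ar A B0)
  (e : rexp ar A B0) rho (iota : St e -> option (St e0)) env :
  (forall m h, rho m = Some h -> Rc1 e0 h (env m)) ->
  (forall m, occurs_free m e -> rho m <> None) ->
  (forall s, Rc1 e0 (cl e rho s) (Var (iota s))) ->
  Rc1 e0 (ssub rho e) (init e iota env).
Proof.
elim: e rho iota => [n|n d IH beta|f args IH] rho iota Hcomp Hdom Hcons /=.
- case E: (rho n) => [h|]; first exact: Hcomp E.
  by case: (Hdom n) => //=.
- exact: (Hcons None).
- constructor => i; apply: IH => //.
  + move=> m Hm; apply: Hdom => /=; apply/existsP; by exists i.
  + move=> s; exact: (Hcons (existT _ i s)).
Qed.

Lemma L2 {Op : Type} {ar : Op -> nat} {A : finType} {B0 : Type} (e0 : rexp ar A B0)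
  (e : rexp ar A B0) rho (iota : St e -> option (St e0)) env a s :
  cvals rho ->
  (forall m h, rho m = Some h -> Rc1 e0 h (env m)) ->
  (forall m, occurs_free m e -> rho m <> None) ->
  (forall s, Rc1 e0 (cl e rho s) (Var (iota s))) ->
  Rc1 e0 (rderiv a (cl e rho s)) (trans e iota env a s).
Proof.
elim: e rho iota env s => [n|n d IH beta|f args IH] rho iota env s Hc Hcomp Hdom Hcons /=.
- by case: s.
- pose C := ssub rho (RMu n d beta).
  have HCcl : rclosed C.
    move=> m; apply/negP => /(free_ssub Hc) [Hm Hr]; exact: (Hdom m Hm Hr).
  pose rho' := updv (remv rho n) n C.
  have Hc' : cvals rho'.
    move=> m h; rewrite /rho' /updv; case: (m == n); first by case=> <-.
    exact: cvals_rem.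
  have Hcomp' : forall m h, rho' m = Some h -> Rc1 e0 h (updT env n (Var (iota None)) m).
    move=> m h; rewrite /rho' /updv /updT /remv; case: (m == n).
      by case=> <-; exact: (Hcons None).
    exact: Hcomp.
  have Hdom' : forall b m, occurs_free m (d b) -> rho' m <> None.
    move=> b m Hm; rewrite /rho' /updv /remv; case: (eqVneq m n) => // Hmn.
    apply: Hdom => /=; rewrite eq_sym Hmn /=; apply/existsP; by exists b.
  case: s => [[b s']|].
    apply: (IH b rho' (fun s'' => iota (Some (existT _ b s''))) _ s' Hc' Hcomp' (Hdom' b)).
    move=> s''; exact: (Hcons (Some (existT _ b s''))).
  rewrite /=.
  rewrite rsubst_ssub; last 2 first.
  + exact: cvals_rem.
  + by rewrite /= eqxx.
  apply: L1; [exact: Hcomp'|exact: Hdom'|].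
  move=> s''; exact: (Hcons (Some (existT _ a s''))).
- case: s => i s' /=; apply: IH => //.
  + move=> m Hm; apply: Hdom => /=; apply/existsP; by exists i.
  + move=> s''; exact: (Hcons (existT _ i s'')).
Qed.


Lemma rout_exists {Op : Type} {ar : Op -> nat} {A : finType} {B0 B : Type}
   (interp : forall f : Op, ('I_(ar f) -> B) -> B) (gen : B0 -> B)
   (e : rexp ar A B0) : rclosed e -> exists b, rout interp gen e b.
Proof.
elim: e => [n|n d IH beta|f args IH] Hcl.
- by have := Hcl n; rewrite /= eqxx.
- by exists (eval interp gen beta); constructor.
- have H : forall i, exists b, rout interp gen (args i) b.
    move=> i; apply: IH => y; apply/negP => Hy.
    by have := Hcl y; rewrite /= => /existsPn /(_ i); rewrite Hy.
  exists (interp f (fun i => proj1_sig (constructive_indefinite_description _ (H i)))).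
  constructor => i; by case: constructive_indefinite_description.
Qed.

Lemma ssub_none {Op : Type} {ar : Op -> nat} {A B0 : Type}
  (e : rexp ar A B0) rho : (forall k, rho k = None) -> ssub rho e = e.
Proof.
elim: e rho => [n|n d IH beta|f args IH] rho H /=.
- by rewrite H.
- congr RMu; apply: functional_extensionality => a; apply: IH => k.
  by case: (k == n).
- congr RApp; apply: functional_extensionality => i; exact: IH.
Qed.

Lemma eval_bind {Op : Type} {ar : Op -> nat} {B : Type}
  (interp : forall f : Op, ('I_(ar f) -> B) -> B) {X Y : Type} (om : Y -> B)
  (t : term ar X) (s : X -> term ar Y) :
  eval interp om (bind t s) = eval interp (fun x => eval interp om (s x)) t.
Proof.
elim: t => [x|f args IH] //=; congr interp; apply: functional_extensionality => i.
exact: IH.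
Qed.

Lemma bind_bind {Op : Type} {ar : Op -> nat} {X Y W : Type}
  (t : term ar X) (s1 : X -> term ar Y) (s2 : Y -> term ar W) :
  bind (bind t s1) s2 = bind t (fun x => bind (s1 x) s2).
Proof.
elim: t => [x|f args IH] //=; congr App; apply: functional_extensionality => i.
exact: IH.
Qed.

Lemma root_lemma {Op : Type} {ar : Op -> nat} {A : finType} {B : Type}
  (interp : forall f : Op, ('I_(ar f) -> B) -> B) (X : finType)
  (om : X -> B) (tm : A -> X -> term ar X) (t : term ar X) :
  exists (om' : option X -> B) (tm' : A -> option X -> term ar (option X)),
    forall w, trace_state interp om' tm' None w = trace_term interp om tm t w.
Proof.
pose mS (u : term ar X) : term ar (option X) := bind u (fun z => Var (Some z)).
pose om' (z : option X) := match z with None => eval interp om t | Some x => om x end.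
pose tm' a (z : option X) := match z with None => mS (bind t (tm a)) | Some x => mS (tm a x) end.
have Hev : forall u, eval interp om' (mS u) = eval interp om u.
  by move=> u; rewrite /mS eval_bind.
have Hb : forall a u, bind (mS u) (tm' a) = mS (bind u (tm a)).
  by move=> a u; rewrite /mS !bind_bind.
have Htr : forall w u, trace_term interp om' tm' (mS u) w = trace_term interp om tm u w.
  elim=> [|a w IH] u /=; first exact: Hev.
  by rewrite Hb IH.
exists om', tm' => -[|a w] //=.
rewrite /trace_state /=; exact: Htr.
Qed.

Lemma dir1 {Op : Type} {ar : Op -> nat} {A : finType} {B0 B : Type}
  (interp : forall f : Op, ('I_(ar f) -> B) -> B) (gen : B0 -> B)
  (e : rexp ar A B0) : rclosed e ->
  exists (X : finType) (om : X -> B) (tm : A -> X -> term ar X) (x : X),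
    rsem_is interp gen e (trace_state interp om tm x).
Proof.
move=> Hcl.
have [b0 _] := rout_exists interp gen e Hcl.
pose Z := option (St e).
pose om1 (z : Z) := match z with None => b0 | Some s => out interp gen e s end.
pose env0 := fun _ : nat => (Var None : term ar Z).
pose tm1 a (z : Z) := match z with None => Var None | Some s => trans e Some env0 a s end.
pose tI := init e Some env0.
have HI : Rc1 e e tI.
  rewrite -{2}(ssub_none e (fun _ => None)) //.
  apply: L1 => //.
  - by move=> m Hm; have := Hcl m; rewrite Hm.
  - by move=> s; exact: r1_base.
have Hsim : forall e' t, Rc1 e e' t -> rout interp gen e' (eval interp om1 t) /\
      forall a, Rc1 e (rderiv a e') (bind t (tm1 a)).
  move=> e' t; elim=> [s|f args ts _ IH].
    split; first exact: out_cl.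
    move=> a; apply: L2 => //.
    - by move=> m Hm; have := Hcl m; rewrite Hm.
    - by move=> s'; exact: r1_base.
  split; first by constructor => i; case: (IH i).
  by move=> a /=; constructor => i; case: (IH i) => _; apply.
have Hsem := sim_lemma Hsim HI.
have [om' [tm' Hroot]] := root_lemma interp _ om1 tm1 tI.
exists _, om', tm', None.
by move=> w; rewrite Hroot; exact: Hsem.
Qed.

Theorem mainTheorem4
  (Op : Type) (ar : Op -> nat)
  (E : term ar nat -> term ar nat -> Prop)
  (A : finType)
  (B : Type) (interp : forall f : Op, ('I_(ar f) -> B) -> B)
  (HB : is_model E interp)
  (B0 : finType) (gen : B0 -> B) (Hgen : generated_by interp gen) :
  (forall e : rexp ar A B0, rclosed e ->
     exists (X : finType) (om : X -> B) (tm : A -> X -> term ar X) (x : X),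
       rsem_is interp gen e (trace_state interp om tm x))
  /\
  (forall (X : finType) (om : X -> B) (tm : A -> X -> term ar X) (x : X),
     exists e : rexp ar A B0,
       rclosed e /\ rsem_is interp gen e (trace_state interp om tm x)).
Proof.
split.
- move=> e Hcl; exact: dir1 interp gen e Hcl.
- move=> X om tm x; exact: dir2 interp gen Hgen X om tm x.
Qed.
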